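(* Let $\pi$ and $\tau$ be endhered patterns of the same size $p$ (identified with permutations of $\{1,\dots,p\}$). If $\pi=\operatorname{letw}(\tau)$ or $\pi=\operatorname{retw}(\tau)$, then for all integers $n,k,m$, $$a_{n,k,m}(\pi,\tau)=a_{n,k,m}(\tau,\pi).$$ In particular, $a_{n,k}(\pi)=a_{n,k}(\tau)$ for all $n,k$.
   Context: A matching of size $n$ is a set of $n$ arcs $(a,b)$ with $1\le a<b\le 2n$ such that each point of $\{1,\dots,2n\}$ belongs to exactly one arc; $a$ is the starting point and $b$ the ending point of the arc. An endhered pattern of size $p$ is a matching of size $p$ in which every starting point precedes every ending point, i.e. its starting points are $1,\dots,p$ and ending points $p+1,\dots,2p$; it is identified with the permutation $\pi=\pi_1\dots\pi_p$ where $\pi_t$ is the starting point of the arc whose ending point is $p+t$. A matching $\mu$ of size $n$ contains $\pi$ at position $(i+1,j+1)$ (integers $i\ge 0$, $j\ge i+p$) if for every $s=1,\dots,p$ the pair $(i+s,\,j+\pi^{-1}(s))$ is an arc of $\mu$, where $\pi^{-1}$ is the inverse permutation; i.e. the arcs starting at $i+1,\dots,i+p$ end exactly at $j+1,\dots,j+p$ and form the pattern $\pi$. The number of occurrences of $\pi$ in $\mu$ is the number of positions at which $\mu$ contains $\pi$. $a_{n,k}(\pi)$ is the number of matchings of size $n$ with exactly $k$ occurrences of $\pi$, and $a_{n,k,m}(\pi,\tau)$ is the number of matchings of size $n$ with exactly $k$ occurrences of $\pi$ and exactly $m$ occurrences of $\tau$. The left endhered twist $\operatorname{letw}$ (resp.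 right endhered twist $\operatorname{retw}$) transforms a matching by reversing every maximal run of consecutive positions that are all starting points (resp. all ending points): within a maximal run $[a,b]$ of starting (resp. ending) points, the arc that had its starting (resp. ending) point at $a+t$ gets it at $b-t$, other endpoints unchanged. Applied to an endhered pattern (viewed as a matching) these give again endhered patterns. *)

(* Defs.v *)
(* All points are 0-indexed: point x of the paper is x-1 here. *)
From mathcomp Require Import all_boot all_order all_fingroup.
Set Implicit Arguments. Unset Strict Implicit. Unset Printing Implicit Defensive.

(* A matching on N points {0,..,N-1} is a fixed-point-free involution f:
   f x is the partner of x; the arc is (x, f x) with starting point x iff x < f x.
   A matching of size n lives on N = n.*2 points. *)
Definition is_matching N (f : {ffun 'I_N -> 'I_N}) : bool :=
  [forall x, (f (f x) == x) && (f x != x)].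

Definition isS N (f : {ffun 'I_N -> 'I_N}) (k : nat) : bool :=
  [exists x : 'I_N, (val x == k) && (x < f x)].
Definition isE N (f : {ffun 'I_N -> 'I_N}) (k : nat) : bool :=
  [exists x : 'I_N, (val x == k) && (f x < x)].

(* For a point k with Q k, the maximal run [run_lo, run_hi] of consecutive
   points satisfying Q and containing k. *)
Definition run_hi N (Q : nat -> bool) (k : nat) : nat :=
  k + find (fun i => ~~ Q (k + i.+1)) (iota 0 N).
Definition run_lo (Q : nat -> bool) (k : nat) : nat :=
  k - find (fun i => ~~ Q (k - i.+1)) (iota 0 k).

Definition run_rev N (Q : nat -> bool) (k : nat) : nat :=
  if Q k then run_lo Q k + run_hi N Q k - k else k.

Definition twist N (Q : nat -> bool) (f : {ffun 'I_N -> 'I_N}) : {ffun 'I_N -> 'I_N} :=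
  let sg (x : 'I_N) : 'I_N := insubd x (run_rev N Q (val x)) in
  [ffun y => sg (f (sg y))].

(* left endhered twist: reverse every maximal run of starting points;
   right endhered twist: reverse every maximal run of ending points. *)
Definition letw N (f : {ffun 'I_N -> 'I_N}) : {ffun 'I_N -> 'I_N} := twist (isS f) f.
Definition retw N (f : {ffun 'I_N -> 'I_N}) : {ffun 'I_N -> 'I_N} := twist (isE f) f.

(* Endhered pattern of size p, given by pi : 'S_p (0-indexed): pi t is the
   starting point (in 0..p-1) of the arc whose ending point is p + t. *)
Definition pat_part p (pi : {perm 'I_p}) (k : nat) : nat :=
  match (insub k : option 'I_p) with
  | Some t => p + val ((pi^-1)%g t)
  | None =>
    match (insub (k - p) : option 'I_p) with
    | Some t => val (pi t)
    | None => k
    end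
  end.

Definition pat_matching p (pi : {perm 'I_p}) : {ffun 'I_(p + p) -> 'I_(p + p)} :=
  [ffun x => insubd x (pat_part pi (val x))].

Definition occurs_at N p (pi : {perm 'I_p}) (f : {ffun 'I_N -> 'I_N}) (i j : nat) : bool :=
  (i + p <= j) &&
  [forall s : 'I_p, [exists x : 'I_N,
     (val x == i + s) && (val (f x) == j + val ((pi^-1)%g s))]].

(* Number of occurrences (for p >= 1 every occurrence has i, j < N). *)
Definition occ N p (pi : {perm 'I_p}) (f : {ffun 'I_N -> 'I_N}) : nat :=
  #|[set ij : 'I_N * 'I_N | occurs_at pi f ij.1 ij.2]|.

Definition a_nk p (pi : {perm 'I_p}) (n k : nat) : nat :=
  #|[set f : {ffun 'I_(n.*2) -> 'I_(n.*2)} | is_matching f && (occ pi f == k)]|.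

Definition a_nkm p (pi tau : {perm 'I_p}) (n k m : nat) : nat :=
  #|[set f : {ffun 'I_(n.*2) -> 'I_(n.*2)} |
      [&& is_matching f, occ pi f == k & occ tau f == m]]|.

(* Main.v *)
Require Import Defs.
From mathcomp Require Import all_boot all_order all_fingroup zify.
From Stdlib Require Import FunctionalExtensionality.
Set Implicit Arguments. Unset Strict Implicit. Unset Printing Implicit Defensive.

Lemma find_eq T (P : pred T) s d x0 : d < size s -> P (nth x0 s d) ->
  (forall i, i < d -> ~~ P (nth x0 s i)) -> find P s = d.
Proof.
move=> ds Pd Hb; case: (ltngtP (find P s) d) => // H.
- have hs : has P s by rewrite has_find; apply: leq_trans ds; apply: ltnW.
  by move: (Hb _ H); rewrite nth_find.
- by move: (before_find x0 H); rewrite Pd.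
Qed.

Section Runs.
Variables (N : nat) (Q : nat -> bool).
Hypothesis HQ : forall k, Q k -> k < N.

Lemma run_hi_eq a b x : a <= x <= b -> (forall y, a <= y <= b -> Q y) ->
  ~~ Q b.+1 -> run_hi N Q x = b.
Proof.
move=> /andP[ax xb] HY Hb.
have bN : b < N by apply: HQ; apply: HY; lia.
rewrite /run_hi (@find_eq _ _ _ (b - x) 0).
- lia.
- by rewrite size_iota; lia.
- by rewrite nth_iota; [rewrite add0n; have -> : x + (b - x).+1 = b.+1 by lia | lia].
- move=> i Hi; rewrite nth_iota; last lia.
  by rewrite negbK add0n; apply: HY; lia.
Qed.

Lemma run_lo_eq a b x : a <= x <= b -> (forall y, a <= y <= b -> Q y) ->
  (a = 0 \/ ~~ Q a.-1) -> run_lo Q x = a.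
Proof.
move=> /andP[ax xb] HY Ha.
rewrite /run_lo.
case: (posnP a) => [a0|apos].
- rewrite hasNfind ?size_iota; first by lia.
  apply/hasPn => i; rewrite mem_iota => /andP[_ Hi]; rewrite negbK; apply: HY; lia.
- case: Ha => [a0|Ha]; first by lia.
  rewrite (@find_eq _ _ _ (x - a) 0).
  + lia.
  + by rewrite size_iota; lia.
  + by rewrite nth_iota; [rewrite add0n; have -> : x - (x - a).+1 = a.-1 by lia | lia].
  + move=> i Hi; rewrite nth_iota; last lia.
    by rewrite negbK add0n; apply: HY; lia.
Qed.

Lemma run_rev_in a b x : a <= x <= b -> (forall y, a <= y <= b -> Q y) ->
  (a = 0 \/ ~~ Q a.-1) -> ~~ Q b.+1 -> run_rev N Q x = a + b - x.
Proof.
move=> H HY Ha Hb; rewrite /run_rev HY //.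
by rewrite (run_lo_eq H HY Ha) (run_hi_eq H HY Hb).
Qed.

Lemma run_exists k : Q k -> exists a b, [/\ a <= k <= b,
  (forall y, a <= y <= b -> Q y), (a = 0 \/ ~~ Q a.-1) & ~~ Q b.+1].
Proof.
move=> Qk; have kN := HQ Qk.
set d := find (fun i => ~~ Q (k + i.+1)) (iota 0 N).
have hd : d < N.
  rewrite -(size_iota 0 N) -has_find; apply/hasP; exists N.-1.
    by rewrite mem_iota; lia.
  apply/negP => /HQ; lia.
have Pd : ~~ Q (k + d.+1).
  have := (@nth_find _ 0 (fun i => ~~ Q (k + i.+1)) (iota 0 N)).
  rewrite has_find size_iota => /(_ hd); rewrite nth_iota //.
have Bd : forall i, i < d -> Q (k + i.+1).
  move=> i Hi; have := (before_find 0 Hi); rewrite nth_iota; last lia.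
  by rewrite add0n => /negbFE.
set e := find (fun i => ~~ Q (k - i.+1)) (iota 0 k).
have Be : forall i, i < e -> Q (k - i.+1).
  move=> i Hi; have ek : e <= k by rewrite -(size_iota 0 k) find_size.
  have := (before_find 0 Hi); rewrite nth_iota; last lia.
  by rewrite add0n => /negbFE.
exists (k - e), (k + d); split.
- lia.
- move=> y Hy; case: (ltngtP y k) => H.
  + have -> : y = k - (k - y).-1.+1 by lia.
    apply: Be; lia.
  + have -> : y = k + (y - k).-1.+1 by lia.
    apply: Bd; lia.
  + by rewrite H.
- case: (ltnP e k) => H.
  + right; have := (@nth_find _ 0 (fun i => ~~ Q (k - i.+1)) (iota 0 k)).
    rewrite has_find size_iota => /(_ H); rewrite nth_iota // add0n.
    by have -> : (k - e).-1 = k - e.+1 by lia.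
  + left; lia.
- by rewrite -addnS.
Qed.

Notation r := (run_rev N Q).

Lemma rr_run x : Q x -> exists a b, [/\ a <= x <= b, b < N,
  (forall y, a <= y <= b -> Q y /\ r y = a + b - y), (a = 0 \/ ~~ Q a.-1) & ~~ Q b.+1].
Proof.
move=> Qx; have [a [b [H1 H2 H3 H4]]] := run_exists Qx.
exists a, b; split => //.
- by apply: HQ; apply: H2; lia.
- by move=> y Hy; split; [apply: H2 | apply: run_rev_in].
Qed.

Lemma rrN x : ~~ Q x -> r x = x.
Proof. by rewrite /run_rev => /negbTE ->. Qed.

Lemma rrQ x : Q x -> Q (r x).
Proof.
move=> Qx; have [a [b [H1 H2 H3 _ _]]] := rr_run Qx.
have [_ ->] := H3 x H1; apply: (H3 _ _).1; lia.
Qed.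

Lemma rr_lt x : x < N -> r x < N.
Proof.
case Qx: (Q x); last by rewrite rrN ?Qx.
by move=> _; apply: HQ; apply: rrQ.
Qed.

Lemma rrK x : r (r x) = x.
Proof.
case Qx: (Q x); last by rewrite !rrN ?Qx.
have [a [b [H1 H2 H3 _ _]]] := rr_run Qx.
have [_ E] := H3 x H1; rewrite E; have [_ ->] := H3 (a + b - x) ltac:(lia); lia.
Qed.

Lemma rr_sep x z : Q x -> ~~ Q z -> ((x < z) = (r x < z)) /\ ((z < x) = (z < r x)).
Proof.
move=> Qx Qz; have [a [b [H1 H2 H3 _ _]]] := rr_run Qx.
have [_ E] := H3 x H1; rewrite E.
have : ~~ (a <= z <= b) by apply/negP => /H3 [] Qz'; rewrite Qz' in Qz.
lia.
Qed.

Lemma rr_block u p : (forall s, s < p.+1 -> Q (u + s)) ->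
  forall s, s < p.+1 -> r (u + s) + s = r u.
Proof.
move=> HB s Hs.
have [a [b [H1 H2 H3 _ H5]]] := rr_run (HB 0 isT) .
rewrite addn0 in H1.
have ub : u + p <= b.
  rewrite leqNgt; apply/negP => H; move: H5; rewrite -(subnKC (_ : u <= b.+1)); last lia.
  by rewrite HB //; lia.
have [_ ->] := H3 (u + s) ltac:(lia); have [_ ->] := H3 u ltac:(lia); lia.
Qed.

End Runs.

Section Match.
Variables (N : nat) (f : {ffun 'I_N -> 'I_N}).

Lemma isS_ord (x : 'I_N) : isS f x = (x < f x).
Proof.
apply/existsP/idP => [[y /andP[/eqP/val_inj -> //]]|H]; by exists x; rewrite eqxx.
Qed.
Lemma isE_ord (x : 'I_N) : isE f x = (f x < x).
Proof.
apply/existsP/idP => [[y /andP[/eqP/val_inj -> //]]|H]; by exists x; rewrite eqxx.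
Qed.
Lemma isS_lt k : isS f k -> k < N.
Proof. by case/existsP => y /andP[/eqP <- _]; apply: ltn_ord. Qed.
Lemma isE_lt k : isE f k -> k < N.
Proof. by case/existsP => y /andP[/eqP <- _]; apply: ltn_ord. Qed.

Hypothesis Hf : is_matching f.
Lemma fK x : f (f x) = x.
Proof. by move/forallP: Hf => /(_ x) /andP[/eqP]. Qed.
Lemma fN x : (f x : nat) != x.
Proof. by move/forallP: Hf => /(_ x) /andP[_]. Qed.
Lemma isE_S (x : 'I_N) : isE f x = ~~ isS f x.
Proof. rewrite isE_ord isS_ord; have := fN x; lia. Qed.
Lemma isS_f (x : 'I_N) : isS f (f x) = ~~ isS f x.
Proof. by rewrite isS_ord fK -isE_ord isE_S. Qed.
Lemma isE_f (x : 'I_N) : isE f (f x) = ~~ isE f x.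
Proof. by rewrite !isE_S isS_f. Qed.
End Match.

Section Twist.
Variables (N : nat) (Q : nat -> bool).
Hypothesis HQ : forall k, Q k -> k < N.
Notation r := (run_rev N Q).
Definition sg (y : 'I_N) : 'I_N := insubd y (r y).

Lemma sg_val y : (sg y : nat) = r y.
Proof. by rewrite /sg val_insubd (rr_lt HQ (ltn_ord y)). Qed.
Lemma sgK y : sg (sg y) = y.
Proof. by apply: val_inj => /=; rewrite !sg_val rrK. Qed.

Lemma twist_eq f y : twist Q f y = sg (f (sg y)).
Proof. by rewrite /twist ffunE. Qed.
Lemma twist_val f y : (twist Q f y : nat) = r (f (sg y)).
Proof. by rewrite twist_eq sg_val. Qed.

Lemma twistK (f : {ffun 'I_N -> 'I_N}) : twist Q (twist Q f) = f.
Proof. by apply/ffunP => y; rewrite !twist_eq !sgK. Qed.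

Lemma twist_matching (f : {ffun 'I_N -> 'I_N}) : is_matching f -> is_matching (twist Q f).
Proof.
move=> Hf; apply/forallP => y; rewrite !twist_eq sgK (fK Hf) sgK eqxx /=.
apply/negP => /eqP E.
have E2 : f (sg y) = sg y by rewrite -{2}E sgK.
by have := fN Hf (sg y); rewrite E2 eqxx.
Qed.
End Twist.

Lemma isS_letw N (f : {ffun 'I_N -> 'I_N}) : is_matching f -> isS (letw f) = isS f.
Proof.
move=> Hf; apply: functional_extensionality => k.
have HQ := @isS_lt N f.
case: (ltnP k N) => kN; last first.
  apply/idP/idP => /isS_lt; lia.
pose x := Ordinal kN; have -> : k = val x by [].
rewrite !isS_ord /letw twist_val //.
case Sx: (x < f x).
- have Sx' : isS f x by rewrite isS_ord.
  have Qs := rrQ HQ Sx'; rewrite -sg_val // in Qs.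
  have Ne : ~~ isS f (f (sg (isS f) x)) by rewrite isS_f // Qs.
  rewrite rrN //; have [-> _] := rr_sep HQ Sx' Ne.
  by rewrite -sg_val // -isS_ord.
- have Nx : ~~ isS f x by rewrite isS_ord Sx.
  have -> : sg (isS f) x = x by apply: val_inj => /=; rewrite sg_val // rrN.
  have Qf : isS f (f x) by rewrite isS_f.
  have [E _] := rr_sep HQ Qf Nx.
  have := fN Hf x; move: E Sx; lia.
Qed.

Lemma isE_retw N (f : {ffun 'I_N -> 'I_N}) : is_matching f -> isE (retw f) = isE f.
Proof.
move=> Hf; apply: functional_extensionality => k.
have HQ := @isE_lt N f.
case: (ltnP k N) => kN; last first.
  apply/idP/idP => /isE_lt; lia.
pose x := Ordinal kN; have -> : k = val x by [].
rewrite !isE_ord /retw twist_val //.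
case Sx: (f x < x).
- have Sx' : isE f x by rewrite isE_ord.
  have Qs := rrQ HQ Sx'; rewrite -sg_val // in Qs.
  have Ne : ~~ isE f (f (sg (isE f) x)) by rewrite isE_f // Qs.
  rewrite rrN //; have [_ ->] := rr_sep HQ Sx' Ne.
  by rewrite -sg_val // -isE_ord.
- have Nx : ~~ isE f x by rewrite isE_ord Sx.
  have -> : sg (isE f) x = x by apply: val_inj => /=; rewrite sg_val // rrN.
  have Qf : isE f (f x) by rewrite isE_f.
  have [_ E] := rr_sep HQ Qf Nx.
  have := fN Hf x; move: E Sx; lia.
Qed.

Lemma letwK N (f : {ffun 'I_N -> 'I_N}) : is_matching f -> letw (letw f) = f.
Proof. move=> Hf; rewrite /letw -/(letw f) isS_letw // /letw twistK //; exact: isS_lt. Qed.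
Lemma retwK N (f : {ffun 'I_N -> 'I_N}) : is_matching f -> retw (retw f) = f.
Proof. move=> Hf; rewrite /retw -/(retw f) isE_retw // /retw twistK //; exact: isE_lt. Qed.
Lemma letw_matching N (f : {ffun 'I_N -> 'I_N}) : is_matching f -> is_matching (letw f).
Proof. apply: twist_matching; exact: isS_lt. Qed.
Lemma retw_matching N (f : {ffun 'I_N -> 'I_N}) : is_matching f -> is_matching (retw f).
Proof. apply: twist_matching; exact: isE_lt. Qed.

Lemma occ_wit N p (sigma : {perm 'I_p}) (f : {ffun 'I_N -> 'I_N}) i j :
  occurs_at sigma f i j -> i + p <= j /\
  forall s : 'I_p, exists x : 'I_N, (x : nat) = i + s /\ (f x : nat) = j + sigma^-1%g s.
Proof.
case/andP => Hij /forallP W; split => // s.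
by have [x /andP[/eqP X1 /eqP X2]] := existsP (W s); exists x.
Qed.

Lemma occ_letw p' (sigma sigma' : {perm 'I_p'.+1}) N (f : {ffun 'I_N -> 'I_N}) :
  is_matching f -> (forall s, (sigma'^-1%g s : nat) = sigma^-1%g (rev_ord s)) ->
  occ sigma f <= occ sigma' (letw f).
Proof.
move=> Hf Hs.
have HQ := @isS_lt N f.
pose r := run_rev N (isS f).
pose h (ij : 'I_N * 'I_N) := (insubd ij.1 (r (ij.1 + p')), ij.2).
have facts : forall i j, occurs_at sigma f i j ->
  [/\ i + p'.+1 <= j, i + p' < N, (forall s, s < p'.+1 -> isS f (i + s)) &
      forall t : 'I_p'.+1, ~~ isS f (j + t)].
  move=> i j /occ_wit [Hij W].
  have HS : forall s, s < p'.+1 -> isS f (i + s).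
    move=> s Hs'; have [x [X1 X2]] := W (Ordinal Hs').
    rewrite -X1 isS_ord X2 /=; move: X1 => /= X1; lia.
  split => //.
  - by apply: HQ; apply: HS.
  - move=> t; have [x [X1 X2]] := W (sigma t).
    rewrite permK in X2; rewrite -X2 isS_f // negbK isS_ord X1 X2; have := ltn_ord (sigma t); lia.
rewrite /occ -(@card_in_imset _ _ h); last first.
  move=> [i1 j1] [i2 j2]; rewrite !inE /= => /facts [_ N1 _ _] /facts [_ N2 _ _] [E1 ->].
  congr (_, _); apply: val_inj => /=.
  move: (congr1 val E1); rewrite !val_insubd !(rr_lt HQ) // => E.
  have := congr1 r E; rewrite /r !(rrK HQ); lia.
apply: subset_leq_card; apply/subsetP => _ /imsetP [[i j] Hij ->].
move: Hij; rewrite !inE /= => /[dup] Hocc /facts [Hij N1 HS NQ].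
have Hb := rr_block HQ HS.
have Qi : isS f i by have := HS 0 isT; rewrite addn0.
have NQj : ~~ isS f j by have := NQ ord0; rewrite addn0.
have [Ej _] := rr_sep HQ Qi NQj.
have rij : r i < j by rewrite -/r -Ej; lia.
have [_ W] := occ_wit Hocc.
rewrite val_insubd (rr_lt HQ) //.
apply/andP; split.
  have := Hb p' (ltnSn _); rewrite -/r; lia.
apply/forallP => s; apply/existsP.
have [y [Y1 Y2]] := W (rev_ord s).
exists (sg (isS f) y); apply/andP; split; apply/eqP.
- rewrite /= sg_val // Y1 /= /r.
  have := Hb p' (ltnSn _); have := Hb (p' - s) ltac:(lia).
  have -> : p'.+1 - s.+1 = p' - s by lia.
  have := ltn_ord s; lia.
- rewrite /= /letw twist_val // sgK // Y2 rrN; last by apply: NQ.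
  by rewrite Hs.
Qed.

Lemma occ_retw p' (sigma sigma' : {perm 'I_p'.+1}) N (f : {ffun 'I_N -> 'I_N}) :
  is_matching f -> (forall s, (sigma'^-1%g s : nat) = rev_ord (sigma^-1%g s)) ->
  occ sigma f <= occ sigma' (retw f).
Proof.
move=> Hf Hs.
have HQ := @isE_lt N f.
pose r := run_rev N (isE f).
pose h (ij : 'I_N * 'I_N) := (ij.1, insubd ij.2 (r (ij.2 + p'))).
have facts : forall i j, occurs_at sigma f i j ->
  [/\ i + p'.+1 <= j, j + p' < N, (forall t, t < p'.+1 -> isE f (j + t)) &
      forall s : 'I_p'.+1, ~~ isE f (i + s)].
  move=> i j /occ_wit [Hij W].
  have HS : forall t, t < p'.+1 -> isE f (j + t).
    move=> t Ht; have [x [X1 X2]] := W (sigma (Ordinal Ht)).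
    rewrite permK /= in X2; rewrite -X2 isE_f // isE_ord X1 X2.
    have := ltn_ord (sigma (Ordinal Ht)); lia.
  split => //.
  - by apply: HQ; apply: HS.
  - move=> s; have [x [X1 X2]] := W s.
    rewrite -X1 isE_ord X2; have := ltn_ord s; lia.
rewrite /occ -(@card_in_imset _ _ h); last first.
  move=> [i1 j1] [i2 j2]; rewrite !inE /= => /facts [_ N1 _ _] /facts [_ N2 _ _] [-> E1].
  congr (_, _); apply: val_inj => /=.
  move: (congr1 val E1); rewrite !val_insubd !(rr_lt HQ) // => E.
  have := congr1 r E; rewrite /r !(rrK HQ); lia.
apply: subset_leq_card; apply/subsetP => _ /imsetP [[i j] Hij ->].
move: Hij; rewrite !inE /= => /[dup] Hocc /facts [Hij N1 HS NQ].
have Hb := rr_block HQ HS.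
have Qj : isE f (j + p') by apply: HS.
have NQi : ~~ isE f (i + p') by have := NQ ord_max.
have [_ Ej] := rr_sep HQ Qj NQi.
have rij : i + p' < r (j + p') by rewrite /r -Ej; lia.
have [_ W] := occ_wit Hocc.
rewrite val_insubd (rr_lt HQ) //.
apply/andP; split; first by lia.
apply/forallP => s; apply/existsP.
have [y [Y1 Y2]] := W s.
exists y; apply/andP; split; apply/eqP; first exact: Y1.
have Ey : sg (isE f) y = y.
  by apply: val_inj => /=; rewrite sg_val // rrN //; have := NQ s; rewrite -Y1.
rewrite /= /retw twist_val // Ey Y2 Hs /=.
have := Hb p' (ltnSn _); have := Hb (sigma^-1%g s) (ltn_ord _).
rewrite /r; have := ltn_ord (sigma^-1%g s); lia.
Qed.

Lemma occ_eq_letw p' (pi tau : {perm 'I_p'.+1}) N (f : {ffun 'I_N -> 'I_N}) :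
  is_matching f -> (forall s, (pi^-1%g s : nat) = tau^-1%g (rev_ord s)) ->
  occ pi (letw f) = occ tau f /\ occ tau (letw f) = occ pi f.
Proof.
move=> Hf Hs.
have Hs' : forall s, (tau^-1%g s : nat) = pi^-1%g (rev_ord s) by move=> s; rewrite Hs rev_ordK.
have Hg := letw_matching Hf.
split; apply/eqP; rewrite eqn_leq; apply/andP; split.
- by rewrite -{2}(letwK Hf); apply: occ_letw Hs'.
- exact: occ_letw Hs.
- by rewrite -{2}(letwK Hf); apply: occ_letw Hs.
- exact: occ_letw Hs'.
Qed.

Lemma occ_eq_retw p' (pi tau : {perm 'I_p'.+1}) N (f : {ffun 'I_N -> 'I_N}) :
  is_matching f -> (forall s, (pi^-1%g s : nat) = rev_ord (tau^-1%g s)) ->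
  occ pi (retw f) = occ tau f /\ occ tau (retw f) = occ pi f.
Proof.
move=> Hf Hs.
have Hs' : forall s, (tau^-1%g s : nat) = rev_ord (pi^-1%g s).
  by move=> s; rewrite /= Hs /=; have := ltn_ord (tau^-1%g s); lia.
have Hg := retw_matching Hf.
split; apply/eqP; rewrite eqn_leq; apply/andP; split.
- by rewrite -{2}(retwK Hf); apply: occ_retw Hs'.
- exact: occ_retw Hs.
- by rewrite -{2}(retwK Hf); apply: occ_retw Hs.
- exact: occ_retw Hs'.
Qed.

Lemma card_map N (T : {ffun 'I_N -> 'I_N} -> {ffun 'I_N -> 'I_N})
  (P1 P2 : {ffun 'I_N -> 'I_N} -> bool) :
  (forall f, is_matching f -> is_matching (T f)) ->
  (forall f, is_matching f -> T (T f) = f) ->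
  (forall f, is_matching f -> P1 f -> P2 (T f)) ->
  #|[set f | is_matching f && P1 f]| <= #|[set f | is_matching f && P2 f]|.
Proof.
move=> HM HK HP; rewrite -(@card_in_imset _ _ T); last first.
  move=> f1 f2; rewrite !inE => /andP[M1 _] /andP[M2 _] E.
  by rewrite -(HK _ M1) E HK.
apply: subset_leq_card; apply/subsetP => _ /imsetP [f Hf ->].
move: Hf; rewrite !inE => /andP[M P]; rewrite HM //=; exact: HP.
Qed.

Lemma final p (pi tau : {perm 'I_p})
  (T : forall N, {ffun 'I_N -> 'I_N} -> {ffun 'I_N -> 'I_N}) :
  (forall N f, is_matching f -> is_matching (T N f)) ->
  (forall N f, is_matching f -> T N (T N f) = f) ->
  (forall N f, is_matching f -> occ pi (T N f) = occ tau f /\ occ tau (T N f) = occ pi f) ->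
  (forall n k m, a_nkm pi tau n k m = a_nkm tau pi n k m) /\
  (forall n k, a_nk pi n k = a_nk tau n k).
Proof.
move=> HM HK HO; split => [n k m|n k]; apply/eqP; rewrite eqn_leq; apply/andP; split.
- apply: (@card_map _ (T _) (fun f => (occ pi f == k) && (occ tau f == m))
     (fun f => (occ tau f == k) && (occ pi f == m)) (HM _) (HK _)) => f Mf.
  by rewrite /=; have [-> ->] := HO _ f Mf.
- apply: (@card_map _ (T _) (fun f => (occ tau f == k) && (occ pi f == m))
     (fun f => (occ pi f == k) && (occ tau f == m)) (HM _) (HK _)) => f Mf.
  by rewrite /=; have [-> ->] := HO _ f Mf.
- apply: (@card_map _ (T _) (fun f => (occ pi f == k)) (fun f => (occ tau f == k)) (HM _) (HK _)) => f Mf.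
  by rewrite /=; have [_ ->] := HO _ f Mf.
- apply: (@card_map _ (T _) (fun f => (occ tau f == k)) (fun f => (occ pi f == k)) (HM _) (HK _)) => f Mf.
  by rewrite /=; have [-> _] := HO _ f Mf.
Qed.

Section Pat.
Variables (p' : nat) (tau : {perm 'I_p'.+1}).
Local Notation p := p'.+1.

Lemma pp_lo k (H : k < p) : pat_part tau k = p + tau^-1%g (Ordinal H).
Proof.
rewrite /pat_part; case: insubP => [u _ Eu|]; last by rewrite H.
by rewrite (_ : u = Ordinal H) //; apply: val_inj.
Qed.

Lemma pp_hi k (H : k - p < p) : p <= k -> pat_part tau k = tau (Ordinal H).
Proof.
move=> pk; rewrite /pat_part; case: insubP => [u Hu _|_]; first by lia.
case: insubP => [u _ Eu|]; last by rewrite H.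
by rewrite (_ : u = Ordinal H) //; apply: val_inj.
Qed.

Lemma pp_lt k : k < p + p -> pat_part tau k < p + p.
Proof.
move=> kp; case: (ltnP k p) => H.
- rewrite (pp_lo H); have := ltn_ord (tau^-1%g (Ordinal H)); lia.
- have H' : k - p < p by lia.
  rewrite (pp_hi H' H); have := ltn_ord (tau (Ordinal H')); lia.
Qed.

Lemma pat_val (x : 'I_(p + p)) : (pat_matching tau x : nat) = pat_part tau x.
Proof. by rewrite ffunE val_insubd (pp_lt (ltn_ord x)). Qed.

Lemma pat_isS : isS (pat_matching tau) = (fun k => k < p).
Proof.
apply: functional_extensionality => k.
case: (ltnP k (p + p)) => kN; last first.
  by apply/idP/idP => [/isS_lt|]; lia.
have -> : k = Ordinal kN by [].
rewrite isS_ord pat_val /=; case: (ltnP k p) => H.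
- rewrite (pp_lo H); lia.
- have H' : k - p < p by lia.
  rewrite (pp_hi H' H); have := ltn_ord (tau (Ordinal H')); lia.
Qed.

Lemma pat_isE : isE (pat_matching tau) = (fun k => p <= k < p + p).
Proof.
apply: functional_extensionality => k.
case: (ltnP k (p + p)) => kN; last first.
  by apply/idP/idP => [/isE_lt|]; lia.
have -> : k = Ordinal kN by [].
rewrite isE_ord pat_val /=; case: (ltnP k p) => H.
- rewrite (pp_lo H); lia.
- have H' : k - p < p by lia.
  rewrite (pp_hi H' H); have := ltn_ord (tau (Ordinal H')); lia.
Qed.
End Pat.

Lemma pp_lo' p' (tau : {perm 'I_p'.+1}) (s : 'I_p'.+1) : pat_part tau s = p'.+1 + tau^-1%g s.
Proof. by rewrite (pp_lo _ (ltn_ord s)); have -> : Ordinal (ltn_ord s) = s by apply: val_inj. Qed.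

Lemma letw_pat p' (tau : {perm 'I_p'.+1}) (s : 'I_p'.+1) :
  (letw (pat_matching tau) (lshift p'.+1 s) : nat) = p'.+1 + tau^-1%g (rev_ord s).
Proof.
have HQ := @isS_lt _ (pat_matching tau).
rewrite /letw twist_val // pat_val sg_val //= pat_isS.
have HQ' : forall k, k < p'.+1 -> k < p'.+1 + p'.+1 by move=> k; lia.
have Er : run_rev (p'.+1 + p'.+1) (fun k => k < p'.+1) s = p' - s.
  rewrite (@run_rev_in _ _ HQ' 0 p') //=; have := ltn_ord s;
  try solve [by left | by rewrite ltnn | move=> *; lia].
have H1 : p' - s < p'.+1 by lia.
rewrite Er (pp_lo _ H1) rrN /=; last by lia.
by have -> : Ordinal H1 = rev_ord s by apply: val_inj => /=; lia.
Qed.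

Lemma retw_pat p' (tau : {perm 'I_p'.+1}) (s : 'I_p'.+1) :
  (retw (pat_matching tau) (lshift p'.+1 s) : nat) = p'.+1 + rev_ord (tau^-1%g s).
Proof.
have HQ := @isE_lt _ (pat_matching tau).
rewrite /retw twist_val // pat_val sg_val //= pat_isE.
have HQ' : forall k, p'.+1 <= k < p'.+1 + p'.+1 -> k < p'.+1 + p'.+1 by move=> k; lia.
have E0 : run_rev (p'.+1 + p'.+1) (fun k => p'.+1 <= k < p'.+1 + p'.+1) s = s.
  by apply: rrN; have := ltn_ord s; lia.
rewrite E0 pp_lo'.
rewrite (@run_rev_in _ _ HQ' p'.+1 (p'.+1 + p')) //=; have := ltn_ord (tau^-1%g s);
  try solve [by right; lia | move=> *; lia].
Qed.

Theorem lemma1 (p : nat) (pi tau : {perm 'I_p}) :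
  (pat_matching pi = letw (pat_matching tau) \/
   pat_matching pi = retw (pat_matching tau)) ->
  (forall n k m, a_nkm pi tau n k m = a_nkm tau pi n k m) /\
  (forall n k, a_nk pi n k = a_nk tau n k).
Proof.
case: p pi tau => [|p'] pi tau H.
  have -> : pi = tau by apply/permP => x; case: x.
  by split.
case: H => H.
- have Hs : forall s, (pi^-1%g s : nat) = tau^-1%g (rev_ord s).
    move=> s; have := congr1 (fun F : {ffun _ -> _} => nat_of_ord (F (lshift p'.+1 s))) H => /=.
    rewrite letw_pat pat_val /= pp_lo'; lia.
  apply: (@final _ pi tau (fun N f => letw f)).
  + move=> N f; exact: letw_matching.
  + move=> N f; exact: letwK.
  + move=> N f Hf; exact: occ_eq_letw.
- have Hs : forall s, (pi^-1%g s : nat) = rev_ord (tau^-1%g s).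
    move=> s; have := congr1 (fun F : {ffun _ -> _} => nat_of_ord (F (lshift p'.+1 s))) H => /=.
    rewrite retw_pat pat_val /= pp_lo'; lia.
  apply: (@final _ pi tau (fun N f => retw f)).
  + move=> N f; exact: retw_matching.
  + move=> N f; exact: retwK.
  + move=> N f Hf; exact: occ_eq_retw.
Qed.
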